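(* Let $d\geq 2$ and let $g:[-1,1]\to(-\infty,\infty]$ be a function that is finite and continuous on $[-1,1)$, differentiable on $(-1,1)$, with $g(1)=\lim_{t\to1^-}g(t)$, and such that $g''$ exists and is convex on $(-1,1)$. Let $\widetilde\omega_{2d}=\{\pm\mathbf e_1,\ldots,\pm\mathbf e_d\}$, where $\mathbf e_1,\dots,\mathbf e_d$ is the standard basis of $\mathbb R^d$. Then the potential $$p^g(\widetilde\omega_{2d},\mathbf x):=\sum_{\mathbf y\in\widetilde\omega_{2d}}g(\mathbf x\cdot\mathbf y)$$ attains its absolute minimum over $S^{d-1}$ at every point of $S^{d-1}$ each of whose coordinates equals $1/\sqrt d$ or $-1/\sqrt d$. Furthermore, $$P^g(\widetilde\omega_{2d},S^{d-1}):=\min_{\mathbf x\in S^{d-1}}p^g(\widetilde\omega_{2d},\mathbf x)=d\left(g\left(\tfrac1{\sqrt d}\right)+g\left(-\tfrac1{\sqrt d}\right)\right).$$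
   Context: $S^{d-1}$ is the unit sphere in $\mathbb R^d$. *)

(* Defs.v *)
From HB Require Import structures.
From mathcomp Require Import all_boot all_order all_algebra.
From mathcomp Require Import all_classical all_reals all_analysis.
Set Implicit Arguments. Unset Strict Implicit. Unset Printing Implicit Defensive.
Import Order.TTheory GRing.Theory Num.Theory.
Import numFieldNormedType.Exports.
Local Open Scope classical_set_scope.
Local Open Scope ring_scope.

Definition dotp (R : realType) (d : nat) (x y : 'rV[R]_d) : R :=
  \sum_(i < d) x 0 i * y 0 i.

Definition sphere (R : realType) (d : nat) : set 'rV[R]_d :=
  [set x | dotp x x = 1].
Arguments sphere : clear implicits.

Definition ebasis (R : realType) (d : nat) (i : 'I_d) : 'rV[R]_d :=
  delta_mx 0 i.
Arguments ebasis R {d} i.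

Definition cross_polytope (R : realType) (d : nat) : seq 'rV[R]_d :=
  [seq ebasis R i | i <- enum 'I_d] ++ [seq - ebasis R i | i <- enum 'I_d].
Arguments cross_polytope : clear implicits.

Definition potential (R : realType) (d : nat) (g : R -> \bar R)
  (omega : seq 'rV[R]_d) (x : 'rV[R]_d) : \bar R :=
  (\sum_(y <- omega) g (dotp x y))%E.

Definition min_potential (R : realType) (d : nat) (g : R -> \bar R)
  (omega : seq 'rV[R]_d) : \bar R :=
  ereal_inf [set potential g omega x | x in sphere R d].

(* Main.v *)
Require Import Defs.
From HB Require Import structures.
From mathcomp Require Import all_boot all_order all_algebra.
From mathcomp Require Import all_classical all_reals all_analysis.
From mathcomp Require Import ring lra.
Import Order.TTheory GRing.Theory Num.Theory.
Import numFieldNormedType.Exports.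
Local Open Scope classical_set_scope.
Local Open Scope ring_scope.


Lemma is_derive_compN (R : realType) (f : R -> R) (x df : R) :
  is_derive (- x) 1 f df -> is_derive x 1 (fun t => f (- t)) (- df).
Proof.
move=> H.
have dN : derivable (-%R : R -> R) x 1 by exact: derivable_opp.
have df' : derivable f (- x) 1 by exact: (@ex_derive _ _ _ _ _ _ _ H).
have d1 : derivable (f \o -%R) x 1.
  apply/derivable1_diffP; apply: differentiable_comp.
    exact/derivable1_diffP.
  exact/derivable1_diffP.
apply: (@DeriveDef _ _ _ _ _ _ _ d1).
transitivity (derive1 (f \o -%R) x); first by rewrite derive1E.
rewrite (derive1_comp dN df') derive1E (@derive_val _ _ _ _ _ _ _ H).
rewrite derive1E (@derive_val _ _ _ _ _ _ _ (is_deriveNid x 1)); lra.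
Qed.

Arguments is_derive_compN {R f x df}.

Lemma psi_mono (R : realType) (G2 : R -> R)
  (hconv : forall a b l : R, -1 < a < 1 -> -1 < b < 1 -> 0 <= l <= 1 ->
     G2 (l * a + (1 - l) * b) <= l * G2 a + (1 - l) * G2 b)
  (s s' : R) : 0 <= s -> s <= s' -> s' < 1 ->
  G2 s + G2 (- s) <= G2 s' + G2 (- s').
Proof.
move=> s0 ss' s'1.
have [s'0e|s'0] := eqVneq s' 0.
  have -> : s = 0 by lra.
  by rewrite s'0e.
have s'p : 0 < s' by rewrite lt_def s'0 (le_trans s0 ss').
set l := (s' + s) / (2 * s').
have l01 : 0 <= l <= 1.
  rewrite /l; apply/andP; split.
    by apply: divr_ge0; lra.
  by rewrite ler_pdivrMr; lra.
have h1 : -1 < s' < 1 by apply/andP; split; lra.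
have h2 : -1 < - s' < 1 by apply/andP; split; lra.
have e1 : l * s' + (1 - l) * (- s') = s.
  by rewrite /l; field; rewrite s'0.
have e2 : l * (- s') + (1 - l) * s' = - s.
  by rewrite /l; field; rewrite s'0.
have := hconv _ _ _ h1 h2 l01; rewrite e1 => H1.
have := hconv _ _ _ h2 h1 l01; rewrite e2 => H2.
lra.
Qed.

Lemma phi_der (R : realType) (G1 : R -> R)
  (hd2 : forall t, -1 < t < 1 -> derivable G1 t 1) (t : R) :
  -1 < t < 1 ->
  is_derive t 1 (fun s => G1 s - G1 (- s)) (derive1 G1 t + derive1 G1 (- t)).
Proof.
move=> Ht.
have Ht' : -1 < - t < 1 by move: Ht => /andP[? ?]; apply/andP; split; lra.
have h1 := derivableP (hd2 t Ht).
have h3 := is_derive_compN (derivableP (hd2 (- t) Ht')).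
have h5 := is_deriveB h1 h3.
apply: (is_derive_eq h5).
by rewrite !derive1E opprK.
Qed.

Lemma k_der (R : realType) (G0 : R -> R) (c t : R) :
  derivable G0 t 1 -> derivable G0 (- t) 1 ->
  is_derive t 1 (fun s => G0 s + G0 (- s) - c * (s * s))
    (derive1 G0 t - derive1 G0 (- t) - c * (2 * t)).
Proof.
move=> H H'.
have h1 := derivableP H.
have h2 := is_derive_compN (derivableP H').
have h3 := is_deriveM (is_derive_id t 1) (is_derive_id t 1).
have h4 := is_deriveZ c h3.
have h5 := is_deriveB (is_deriveD h1 h2) h4.
apply: (is_derive_eq h5).
rewrite !derive1E /=; rewrite /GRing.scale /=; lra.
Qed.

Lemma phiL (R : realType) (G1 : R -> R)
  (hd2 : forall t, -1 < t < 1 -> derivable G1 t 1)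
  (hconv : forall a b l : R, -1 < a < 1 -> -1 < b < 1 -> 0 <= l <= 1 ->
     derive1 G1 (l * a + (1 - l) * b) <= l * derive1 G1 a + (1 - l) * derive1 G1 b)
  (u v : R) : 0 <= u -> u <= v -> v < 1 ->
  v * (G1 u - G1 (- u)) <= u * (G1 v - G1 (- v)).
Proof.
move=> u0 uv v1.
set phi := fun s => G1 s - G1 (- s).
set dphi := fun s => derive1 G1 s + derive1 G1 (- s).
have Hd : forall x : R, -1 < x < 1 -> is_derive x 1 phi (dphi x).
  by move=> x Hx; exact: phi_der.
have Hc : forall p q : R, -1 < p -> q < 1 -> {within `[p, q], continuous phi}.
  move=> p q p1 q1; apply: derivable_within_continuous => x.
  rewrite in_itv /= => /andP[px xq].
  have Hx : -1 < x < 1 by apply/andP; split; lra.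
  exact: (@ex_derive _ _ _ _ _ _ _ (Hd x Hx)).
have Hi : forall p q : R, -1 < p -> q < 1 -> forall x, x \in `]p, q[ -> is_derive x 1 phi (dphi x).
  move=> p q p1 q1 x; rewrite in_itv /= => /andP[px xq]; apply: Hd.
  apply/andP; split; lra.
have [c1 c1in e1] := MVT_segment u0 (Hi 0 u ltac:(lra) ltac:(lra)) (Hc 0 u ltac:(lra) ltac:(lra)).
have [c2 c2in e2] := MVT_segment uv (Hi u v ltac:(lra) ltac:(lra)) (Hc u v ltac:(lra) ltac:(lra)).
move: c1in c2in; rewrite !in_itv /= => /andP[c10 c1u] /andP[c2u c2v].
have m : dphi c1 <= dphi c2.
  have := @psi_mono R (derive1 G1) hconv c1 c2; rewrite /dphi; apply; lra.
have p0 : phi 0 = 0 by rewrite /phi oppr0 subrr.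
rewrite p0 subr0 in e1.
have hu : phi u = dphi c1 * u by rewrite e1 subr0.
have hv : phi v = dphi c1 * u + dphi c2 * (v - u) by rewrite -hu -e2; lra.
rewrite -/(phi u) -/(phi v) hu hv.
have : 0 <= u * (v - u) * (dphi c2 - dphi c1).
  apply: mulr_ge0; [apply: mulr_ge0; lra | lra].
nra.
Qed.

Lemma kmono (R : realType) (G0 : R -> R)
  (hd1 : forall t, -1 < t < 1 -> derivable G0 t 1)
  (hd2 : forall t, -1 < t < 1 -> derivable (derive1 G0) t 1)
  (hconv : forall a b l : R, -1 < a < 1 -> -1 < b < 1 -> 0 <= l <= 1 ->
     derive1 (derive1 G0) (l * a + (1 - l) * b)
       <= l * derive1 (derive1 G0) a + (1 - l) * derive1 (derive1 G0) b)
  (a : R) (a0 : 0 < a) (a1 : a < 1) (t : R) : -1 < t < 1 ->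
  G0 a + G0 (- a) - (derive1 G0 a - derive1 G0 (- a)) / (2 * a) * (a * a)
  <= G0 t + G0 (- t) - (derive1 G0 a - derive1 G0 (- a)) / (2 * a) * (t * t).
Proof.
move=> Ht.
set c := (derive1 G0 a - derive1 G0 (- a)) / (2 * a).
set k := fun s => G0 s + G0 (- s) - c * (s * s).
change (k a <= k t).
have Kd : forall x : R, -1 < x < 1 ->
    is_derive x 1 k (derive1 G0 x - derive1 G0 (- x) - c * (2 * x)).
  move=> x Hx; apply: k_der; apply: hd1 => //.
  by move: Hx => /andP[? ?]; apply/andP; split; lra.
have sgn : forall x : R, -1 < x < 1 ->
    a * derive1 k x = a * (derive1 G0 x - derive1 G0 (- x))
                      - x * (derive1 G0 a - derive1 G0 (- a)).
  move=> x Hx; rewrite derive1E (@derive_val _ _ _ _ _ _ _ (Kd x Hx)) /c.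
  by field; rewrite gt_eqF.
have kc : forall p q : R, -1 < p -> q < 1 -> {within `[p, q], continuous k}.
  move=> p q p1 q1; apply: derivable_within_continuous => x.
  rewrite in_itv /= => /andP[px xq].
  have Hx : -1 < x < 1 by apply/andP; split; lra.
  exact: (@ex_derive _ _ _ _ _ _ _ (Kd x Hx)).
have kdv : forall p q : R, -1 < p -> q < 1 -> forall x, x \in `]p, q[ -> derivable k x 1.
  move=> p q p1 q1 x; rewrite in_itv /= => /andP[px xq].
  have Hx : -1 < x < 1 by apply/andP; split; lra.
  exact: (@ex_derive _ _ _ _ _ _ _ (Kd x Hx)).
have main : forall s, 0 <= s -> s < 1 -> k a <= k s.
  move=> s s0 s1; case: (leP s a) => sa.
    apply: (@ler0_derive1_le_cc R k 0 a (kdv 0 a ltac:(lra) a1)) => //.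
    - move=> x; rewrite in_itv /= => /andP[x0 xa].
      have Hx : -1 < x < 1 by apply/andP; split; lra.
      have := sgn x Hx.
      have := @phiL R (derive1 G0) hd2 hconv x a ltac:(lra) ltac:(lra) a1.
      nra.
    - exact: kc.
    - by rewrite in_itv /=; apply/andP; split; lra.
    - by rewrite in_itv /=; apply/andP; split; lra.
  apply: (@ger0_derive1_le_cc R k a s (kdv a s ltac:(lra) s1)).
  - move=> x; rewrite in_itv /= => /andP[ax xs].
    have Hx : -1 < x < 1 by apply/andP; split; lra.
    have := sgn x Hx.
    have := @phiL R (derive1 G0) hd2 hconv a x ltac:(lra) ltac:(lra) ltac:(lra).
    nra.
  - apply: kc; lra.
  - by rewrite in_itv /=; apply/andP; split; lra.
  - by rewrite in_itv /=; apply/andP; split; lra.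
  - exact: ltW.
move: Ht => /andP[t1 t2].
case: (leP 0 t) => t0; first exact: main.
have -> : k t = k (- t) by rewrite /k opprK; lra.
apply: main; lra.
Qed.

Lemma kbound (R : realType) (g : R -> \bar R)
  (hfin : forall t : R, (-1 <= t < 1)%R -> g t \is a fin_num)
  (hg1 : g 1 != -oo%E)
  (hcont : {within `[-1, 1[, continuous (fun t : R => fine (g t))})
  (hlim : (fine (g t))%:E @[t --> at_left 1%R] --> g 1%R)
  (K a c : R) (a0 : (0 < a)%R) (a1 : (a < 1)%R)
  (hk : forall t : R, (a < t < 1)%R -> (K <= fine (g t) + fine (g (- t)) - c * (t * t))%R) :
  ((K + c)%:E <= g 1%R + g (-1)%R)%E.
Proof.
have fm1 : g (-1)%R \is a fin_num by apply: hfin; apply/andP; split; lra.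
rewrite -(fineK fm1).
case E: (g 1%R) => [L| |]; last by rewrite E in hg1.
  2: by rewrite addye ?leey.
rewrite E in hlim.
have h1 : (fun t => fine (g t)) @ at_left 1%R --> L.
  by move/fine_cvgP: hlim => [_].
have hc2 : {within `[-1%R, 0%R], continuous (fun t : R => fine (g t))}.
  apply: continuous_subspaceW hcont => x /=; rewrite !in_itv /= => /andP[x1 x2].
  by apply/andP; split; lra.
have [_ hr _] := (continuous_within_itvP _ (ltac:(lra) : (-1 < 0 :> R)%R)).1 hc2.
have h2 : (fun t => fine (g (- t))) @ at_left 1%R --> fine (g (-1)%R).
  apply/cvg_at_leftNP.
  have -> : (fun t => fine (g (- t))) \o -%R = (fun t => fine (g t)).
    by apply/funext => x /=; rewrite opprK.
  exact: hr.
have h3 : (fun t : R => c * (t * t))%R @ at_left 1%R --> (c * (1 * 1))%R.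
  apply: cvg_at_left_filter; apply: cvgMl_tmp; apply: cvgM; exact: cvg_id.
have h4 : (fun t => fine (g t) + fine (g (- t)) - c * (t * t))%R @ at_left 1%R
    --> (L + fine (g (-1)%R) - c * (1 * 1))%R.
  by apply: cvgB; [apply: cvgD|]; [exact: h1|exact: h2|exact: h3].
have hK : (K <= lim ((fun t => fine (g t) + fine (g (- t)) - c * (t * t)) @ at_left 1%R))%R.
  apply: limr_ge; first by apply/cvg_ex; eexists; exact: h4.
  near=> t; apply: hk; apply/andP; split.
    by near: t; exact: nbhs_left_gt.
  by near: t; exact: nbhs_left_lt.
rewrite (cvg_lim (@Rhausdorff R) h4) in hK.
rewrite -EFinD lee_fin; lra.
Unshelve. all: end_near.
Qed.

Lemma dotp_e (R : realType) d (z : 'rV[R]_d) j : dotp z (ebasis R j) = z 0 j.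
Proof.
rewrite /dotp (bigD1 j) //= !mxE !eqxx mulr1 big1 ?addr0 // => k kj.
by rewrite mxE (negbTE kj) andbF mulr0.
Qed.

Lemma dotp_Ne (R : realType) d (z : 'rV[R]_d) j : dotp z (- ebasis R j) = - z 0 j.
Proof.
rewrite -dotp_e /dotp -sumrN; apply: eq_bigr => k _.
by rewrite mxE mulrN.
Qed.

Lemma pot_eq (R : realType) d (g : R -> \bar R) (z : 'rV[R]_d) :
  potential g (cross_polytope R d) z = (\sum_(i < d) (g (z 0%R i) + g (- z 0%R i)%R))%E.
Proof.
rewrite /potential /cross_polytope big_cat !big_map /= -big_split /=.
apply: eq_bigr => i _.
by rewrite dotp_e dotp_Ne.
Qed.

Lemma sq_le1 (R : realType) d (z : 'rV[R]_d) i : dotp z z = 1 -> -1 <= z 0 i <= 1.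
Proof.
move=> hz.
have : z 0 i * z 0 i <= 1.
  rewrite -hz /dotp (bigD1 i) //= lerDl; apply: sumr_ge0 => k _.
  nra.
move=> H; apply/andP; split; nra.
Qed.

Theorem theorem5p1 (R : realType) (d : nat) (g : R -> \bar R) :
  (2 <= d)%N ->
  (* g : [-1,1] -> (-oo, +oo], finite on [-1,1) *)
  (forall t : R, -1 <= t < 1 -> g t \is a fin_num) ->
  g 1 != -oo%E ->
  (* continuous on [-1,1) *)
  {within `[-1, 1[, continuous (fun t : R => fine (g t))} ->
  (* differentiable on (-1,1) *)
  (forall t : R, -1 < t < 1 -> derivable (fun t : R => fine (g t)) t 1) ->
  (* g(1) = lim_{t -> 1^-} g(t) *)
  ((fine (g t))%:E @[t --> at_left 1] --> g 1) ->
  (* g'' exists on (-1,1) *)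
  (forall t : R, -1 < t < 1 -> derivable (derive1 (fun t : R => fine (g t))) t 1) ->
  (* g'' is convex on (-1,1) *)
  (forall a b l : R, -1 < a < 1 -> -1 < b < 1 -> 0 <= l <= 1 ->
     derive1 (derive1 (fun t : R => fine (g t))) (l * a + (1 - l) * b)
       <= l * derive1 (derive1 (fun t : R => fine (g t))) a + (1 - l) * derive1 (derive1 (fun t : R => fine (g t))) b) ->
  (forall x : 'rV[R]_d,
     (forall i, x 0 i = 1 / Num.sqrt d%:R \/ x 0 i = - (1 / Num.sqrt d%:R)) ->
     x \in sphere R d /\
     forall z : 'rV[R]_d, z \in sphere R d ->
       (potential g (cross_polytope R d) x <= potential g (cross_polytope R d) z)%E)
  /\
  min_potential g (cross_polytope R d)
    = (d%:R%:E * (g (1 / Num.sqrt d%:R)%R + g (- (1 / Num.sqrt d%:R))%R))%E.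
Proof.
move=> d2 hfin hg1 hcont hd1 hlim hd2 hconv.
have hd : (2 : R) <= d%:R by rewrite (ler_nat R 2 d).
set s := Num.sqrt (d%:R : R).
have s0 : 0 < s by rewrite sqrtr_gt0; lra.
have ss : s * s = d%:R by rewrite -expr2 sqr_sqrtr // ler0n.
set a := 1 / s.
have a0 : 0 < a by rewrite /a divr_gt0.
have a1 : a < 1 by rewrite /a ltr_pdivrMr // mul1r; nra.
have daa : d%:R * (a * a) = 1 by rewrite /a -ss; field; rewrite gt_eqF.
set c := (derive1 (fun t => fine (g t)) a - derive1 (fun t => fine (g t)) (- a)) / (2 * a).
set K := fine (g a) + fine (g (- a)) - c * (a * a).
have hkm : forall t, -1 < t < 1 -> K <= fine (g t) + fine (g (- t)) - c * (t * t).
  move=> t Ht; exact: (@kmono R (fun t => fine (g t)) hd1 hd2 hconv a a0 a1 t Ht).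
have kb : ((K + c)%:E <= g 1%R + g (-1)%R)%E.
  apply: (@kbound R g hfin hg1 hcont hlim K a c a0 a1) => u /andP[au u1].
  apply: hkm; apply/andP; split; lra.
have pw : forall t, -1 <= t <= 1 -> ((K + c * (t * t))%R%:E <= g t + g (- t)%R)%E.
  move=> t /andP[t1 t2].
  have [->|t1'] := eqVneq t 1; first by rewrite !mulr1.
  have [->|t2'] := eqVneq t (-1); first by rewrite opprK mulrNN !mulr1 addeC.
  have Ht : -1 < t < 1.
    apply/andP; split; rewrite lt_def ?t1 ?t2 ?andbT //.
      by rewrite eq_sym.
  have ht : g t \is a fin_num by apply: hfin; apply/andP; split; lra.
  have hmt : g (- t) \is a fin_num by apply: hfin; apply/andP; split; lra.
  rewrite -[g t](fineK ht) -[g (- t)](fineK hmt) -EFinD lee_fin.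
  have := hkm t Ht; lra.
have sumK : forall z : 'rV[R]_d, dotp z z = 1 ->
    \sum_(i < d) (K + c * (z 0 i * z 0 i)) = d%:R * K + c.
  move=> z hz; rewrite big_split /= sumr_const card_ord -mulr_sumr.
  have -> : \sum_(i < d) z 0 i * z 0 i = 1 by exact: hz.
  rewrite mulr1 mulr_natl.
  by [].
have lower : forall z : 'rV[R]_d, z \in sphere R d ->
    ((d%:R * K + c)%R%:E <= potential g (cross_polytope R d) z)%E.
  move=> z /set_mem hz; rewrite pot_eq -(sumK z hz) -sumEFin.
  apply: lee_sum => i _; apply: pw; exact: sq_le1.
have ha : g a \is a fin_num by apply: hfin; apply/andP; split; lra.
have hma : g (- a) \is a fin_num by apply: hfin; apply/andP; split; lra.
have ea : (g a + g (- a)%R = (K + c * (a * a))%R%:E)%E.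
  by rewrite -[g a](fineK ha) -[g (- a)](fineK hma) -EFinD /K; congr EFin; lra.
have atx : forall x : 'rV[R]_d, (forall i, x 0 i = a \/ x 0 i = - a) ->
    dotp x x = 1 /\ potential g (cross_polytope R d) x = (d%:R * K + c)%:E.
  move=> x hx.
  have xx : forall i, x 0 i * x 0 i = a * a.
    by move=> i; case: (hx i) => ->; [|rewrite mulrNN].
  have dx : dotp x x = 1.
    by rewrite /dotp (eq_bigr _ (fun i _ => xx i)) sumr_const card_ord -mulr_natl.
  split => //; rewrite pot_eq -(sumK x dx) -sumEFin; apply: eq_bigr => i _.
  rewrite xx; case: (hx i) => ->; first exact: ea.
  by rewrite opprK addeC.
split.
  move=> x hx; have [dx px] := atx x hx; split; first exact: mem_set.
  by move=> z hz; rewrite px; exact: lower.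
pose x0 : 'rV[R]_d := \row_(i < d) a.
have hx0 : forall i, x0 0 i = a \/ x0 0 i = - a by move=> i; left; rewrite mxE.
have [dx0 px0] := atx x0 hx0.
have -> : (d%:R%:E * (g a + g (- a)%R))%E = (d%:R * K + c)%:E.
  rewrite ea -EFinM; congr EFin.
  have -> : d%:R * (K + c * (a * a)) = d%:R * K + c * (d%:R * (a * a)) by ring.
  by rewrite daa mulr1.
apply/le_anti/andP; split.
  by apply: ereal_inf_lbound; exists x0.
apply: le_ereal_inf_tmp => _ [z hz <-]; apply: lower; exact: mem_set.
Qed.
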